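(* For every Hessenberg space $H$ of $n\times n$ matrices, the variety $X_H=\{[g]\in GL_n(\mathbb{C})/B : g^{-1}E_{1n}g\in H\}$ is a union of Schubert varieties $Y_w$.
   Context: $B$ is the group of invertible upper-triangular $n\times n$ complex matrices; $[g]\in GL_n(\mathbb{C})/B$ denotes the flag whose $k$-dimensional subspace is spanned by the first $k$ columns of $g$. $E_{kl}$ denotes the matrix unit with $1$ in entry $(k,l)$ and $0$ elsewhere. A permutation $w$ of $\{1,\dots,n\}$ is identified with the permutation matrix satisfying $we_k=e_{w(k)}$ for the standard basis $e_1,\dots,e_n$. The Schubert variety $Y_w$ is the closure of $\{[bw]: b\in B\}$. A Hessenberg space is a subspace of the form $H_h=\operatorname{span}\{E_{kl}: k\le h(l)\}$ for a nondecreasing function $h:\{1,\dots,n\}\to\{0,1,\dots,n\}$. *)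

(* Defs.v *)
From HB Require Import structures.
From mathcomp Require Import all_boot all_algebra all_fingroup.
From mathcomp Require Import reals complex.
From mathcomp Require Import mpoly.

Set Implicit Arguments.
Unset Strict Implicit.
Unset Printing Implicit Defensive.
Import GRing.Theory Num.Theory.
Local Open Scope ring_scope.

(* Matrices are (m.+1) x (m.+1) = n x n with n = m.+1 >= 1; indices are
   0-based, so paper index k corresponds to ordinal k-1. *)

Section Defs.
Variables (R : realType) (m : nat).
Local Notation C := (R[i]).
Local Notation n := m.+1.
Local Notation M := 'M[C]_n.

Definition upper_unit (b : M) : Prop :=
  b \in unitmx /\ forall i j : 'I_n, (j < i)%N -> b i j = 0.

(* permutation matrix of w, with w e_k = e_{w k}: entry (i,j) = [i == w j] *)
Definition permmat (w : 'S_n) : M := \matrix_(i, j) (i == w j)%:R.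

(* Sets of flags in GL_n/B are identified with their preimages in GL_n,
   i.e. with right-B-saturated sets of invertible matrices. *)
Definition Bsat (Z : M -> Prop) : Prop :=
  forall g b, Z g -> upper_unit b -> Z (g *m b).

Definition zariski_closed (Z : M -> Prop) : Prop :=
  exists P : {mpoly C[n * n]} -> Prop,
    forall g : M, Z g <-> (g \in unitmx /\
        forall p, P p -> p.@[fun k => mxvec g 0 k] = 0).

(* Closed subsets of GL_n/B (quotient Zariski topology) = sets whose preimage
   is Zariski closed. Preimage in GL_n of the Schubert variety
   Y_w = closure of {[b w] : b in B}: intersection of all closed sets of
   flags containing every [b w]. *)
Definition schubert (w : 'S_n) (g : M) : Prop :=
  g \in unitmx /\
  forall Z : M -> Prop, Bsat Z -> zariski_closed Z ->
    (forall b, upper_unit b -> Z (b *m permmat w)) -> Z g.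

(* Hessenberg function h (values in {0..n}, nondecreasing), paper
   indexing: h(l) for l = j+1 is h j. *)
Definition hessenberg_fun (h : 'I_n -> nat) : Prop :=
  (forall j, (h j <= n)%N) /\ (forall j1 j2 : 'I_n, (j1 <= j2)%N -> (h j1 <= h j2)%N).

(* X in H_h = span{E_kl : k <= h(l)} iff X is supported on those entries:
   with 0-based i = k-1, j = l-1 the condition k <= h(l) reads i < h j. *)
Definition in_hess (h : 'I_n -> nat) (X : M) : Prop :=
  forall i j : 'I_n, (h j <= i)%N -> X i j = 0.

Definition E1n : M := delta_mx 0 ord_max.

Definition XH (h : 'I_n -> nat) (g : M) : Prop :=
  g \in unitmx /\ in_hess h (invmx g *m E1n *m g).
End Defs.

(* Main.v *)
Require Import Defs.
From HB Require Import structures.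
From mathcomp Require Import all_boot all_algebra all_fingroup.
From mathcomp Require Import reals complex mpoly.
Set Implicit Arguments.
Unset Strict Implicit.
Unset Printing Implicit Defensive.
Import GRing.Theory Num.Theory.
Local Open Scope ring_scope.

Section Gen.
Variables (F : fieldType) (n : nat).
Implicit Types A B : 'M[F]_n.

Definition upper A := forall i j : 'I_n, (j < i)%N -> A i j = 0.

Lemma upper_mul A B : upper A -> upper B -> upper (A *m B).
Proof.
move=> hA hB i j lt_ji; rewrite mxE big1 // => k _.
case: (ltnP k i) => hk; first by rewrite hA // mul0r.
by rewrite hB ?mulr0 // (leq_trans lt_ji hk).
Qed.

Lemma upper_det A : upper A -> \det A = \prod_(i < n) A i i.
Proof.
move=> hA; rewrite -det_tr det_trig; first by apply: eq_bigr => i _; rewrite mxE.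
by apply/is_trig_mxP => i j lt_ij; rewrite mxE hA.
Qed.

Lemma upper_unitP A : upper A -> (A \in unitmx) = [forall i, A i i != 0].
Proof.
move=> hA; rewrite unitmxE upper_det // unitfE.
apply/prodf_neq0/forallP => [H i|H i _]; first exact: H.
exact: H.
Qed.

Lemma invmxM A B : A \in unitmx -> B \in unitmx -> invmx (A *m B) = invmx B *m invmx A.
Proof.
move=> uA uB; have uAB : A *m B \in unitmx by rewrite unitmx_mul uA.
have E : (A *m B) *m (invmx B *m invmx A) = 1%:M.
  by rewrite mulmxA -(mulmxA A) mulmxV // mulmx1 mulmxV.
by rewrite -[LHS]mulmx1 -E mulmxA mulVmx // mul1mx.
Qed.

Lemma upper_inv A : upper A -> A \in unitmx -> upper (invmx A).
Proof.
move=> hA uA; have hd := uA; rewrite upper_unitP // in hd.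
set U := invmx A.
have E : A *m U = 1%:M by rewrite mulmxV.
suff H : forall d (i j : 'I_n), (n - i <= d)%N -> (j < i)%N -> U i j = 0.
  by move=> i j; apply: (H (n - i)%N).
elim=> [|d IH] i j hd' lt_ji.
  by move: hd'; rewrite leqn0 subn_eq0 leqNgt ltn_ord.
have := congr1 (fun M : 'M_n => M i j) E; rewrite !mxE (bigD1 i) //=.
rewrite big1 ?addr0; last first.
  move=> k nki; case: (ltnP k i) => hk; first by rewrite hA // mul0r.
  rewrite IH ?mulr0 //; last by rewrite (leq_trans lt_ji hk).
  have hki : (i < k)%N by rewrite ltn_neqAle hk andbT eq_sym.
  by rewrite -ltnS (leq_trans _ hd') // ltn_sub2l.
have -> : (i == j) = false by apply/negbTE; rewrite neq_ltn lt_ji orbT.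
move/eqP; rewrite mulf_eq0 => /orP[]; last by move/eqP.
by move: (forallP hd i) => /negbTE ->.
Qed.

Lemma mul_delta_r m1 n1 p1 (A : 'M[F]_(m1, n1)) (p : 'I_n1) (q : 'I_p1) i j :
  (A *m delta_mx p q) i j = if j == q then A i p else 0.
Proof.
rewrite mxE (bigD1 p) //= big1 ?addr0; last by move=> k nkp; rewrite mxE (negbTE nkp) mulr0.
by rewrite mxE eqxx /=; case: (j == q); rewrite ?mulr1 ?mulr0.
Qed.


Lemma upper1 : upper (1%:M : 'M[F]_n).
Proof. by move=> i j lt_ji; rewrite mxE; case: eqP => // e; move: lt_ji; rewrite e ltnn. Qed.

Lemma unit_nz_col (G : 'M[F]_n) (k : 'I_n) : G \in unitmx ->
  ~ (forall i : 'I_n, G i k = 0).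
Proof.
move=> uG hz.
have E : G *m (delta_mx k 0 : 'cV[F]_n) = 0.
  by apply/matrixP => i j; rewrite mul_delta_r mxE; case: eqP => // _; rewrite hz.
have := congr1 (fun M => (invmx G *m M) k 0) E.
by rewrite mulKmx // mulmx0 !mxE !eqxx /= => /eqP; rewrite oner_eq0.
Qed.

Lemma inner (G : 'M[F]_n) (k : 'I_n) (l : 'I_n -> 'I_n) :
  G \in unitmx ->
  (forall j : 'I_n, (j < k)%N -> G (l j) j != 0 /\ forall i : 'I_n, (l j < i)%N -> G i j = 0) ->
  forall N c, upper c -> c \in unitmx ->
  (forall (j i : 'I_n), (j < k)%N -> (G *m c) i j = G i j) ->
  (forall i : 'I_n, (N <= i)%N -> (G *m c) i k = 0) ->
  exists c', [/\ upper c', c' \in unitmx,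
    (forall (j i : 'I_n), (j < k)%N -> (G *m c') i j = G i j) &
    exists r, [/\ (G *m c') r k != 0, (forall i : 'I_n, (r < i)%N -> (G *m c') i k = 0)
       & forall j : 'I_n, (j < k)%N -> l j != r]].
Proof.
move=> uG hl; elim=> [|N IH] c uc1 uc2 hcols hz.
  have uGc : G *m c \in unitmx by rewrite unitmx_mul uG.
  by exfalso; apply: (unit_nz_col (k := k) uGc) => i; apply: hz.
case: (ltnP N n) => hN; last first.
  apply: (IH c) => // i hi; exfalso; move: (ltn_ord i); rewrite ltnNge.
  by rewrite (leq_trans hN hi).
set r : 'I_n := Ordinal hN.
case: (eqVneq ((G *m c) r k) 0) => hr.
  apply: (IH c) => // i; rewrite leq_eqVlt => /orP[/eqP e|hi]; last exact: hz.
  by have -> : i = r by apply: val_inj; rewrite /= e.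
case: (pickP (fun j : 'I_n => (j < k)%N && (l j == r))) => [j0 /andP[hj0 /eqP hlj0] | none]; last first.
  exists c; split => //; exists r; split => //.
  by move=> j hj; have := none j; rewrite hj /= => ->.
have [hGj0 hGj0z] := hl j0 hj0.
set a := (G *m c) r k / G r j0.
set e := (1%:M - a *: delta_mx j0 k) : 'M[F]_n.
have hjk : j0 != k by rewrite neq_ltn hj0.
have ue1 : upper e.
  move=> i j lt_ji; rewrite !mxE.
  have -> : (i == j) = false by apply/negbTE; rewrite neq_ltn lt_ji orbT.
  case: (eqVneq i j0) => [ei|]; case: (eqVneq j k) => [ej|] //=; rewrite ?mulr0 ?subr0 //.
  by exfalso; move: lt_ji; rewrite ei ej ltnNge ltnW.
have ue2 : e \in unitmx.
  rewrite upper_unitP //; apply/forallP => i; rewrite !mxE eqxx.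
  case: (eqVneq i j0) => [ei|] /=; last by rewrite mulr0 subr0 oner_eq0.
  have -> : (i == k) = false by rewrite ei (negbTE hjk).
  by rewrite mulr0 subr0 oner_eq0.
have E2 : forall i j, (G *m (c *m e)) i j =
     (G *m c) i j - (if j == k then a * G i j0 else 0).
  move=> i j; rewrite mulmxA /e mulmxBr mulmx1 -scalemxAr [LHS]mxE; congr (_ + _); rewrite mxE [X in - X]mxE mul_delta_r.
  case: eqP => _; last by rewrite mulr0.
  by rewrite hcols.
apply: (IH (c *m e)).
- exact: upper_mul.
- by rewrite unitmx_mul uc2.
- move=> j i hj; rewrite E2.
  have -> : (j == k) = false by apply/negbTE; rewrite neq_ltn hj.
  by rewrite subr0 hcols.
- move=> i hi; rewrite E2 eqxx.
  move: hi; rewrite leq_eqVlt => /orP[/eqP ei|hi].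
    have -> : i = r by apply: val_inj; rewrite /= ei.
    by rewrite /a mulfVK ?subrr // -hlj0.
  rewrite hz // hGj0z ?mulr0 ?subrr // hlj0 //.
Qed.

Lemma outer (g : 'M[F]_n) : g \in unitmx -> forall k, (k <= n)%N ->
  exists c l, [/\ upper c, c \in unitmx,
   (forall j : 'I_n, (j < k)%N -> (g *m c) (l j) j != 0 /\
        forall i : 'I_n, (l j < i)%N -> (g *m c) i j = 0) &
   (forall j1 j2 : 'I_n, (j1 < k)%N -> (j2 < k)%N -> l j1 = l j2 -> j1 = j2)].
Proof.
move=> ug; elim=> [|k IH] hk.
  by exists 1%:M, id; split => //; [exact: upper1 | exact: unitmx1].
have [c [l [uc1 uc2 hl hinj]]] := IH (ltnW hk).
set kk : 'I_n := Ordinal hk.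
have uG : g *m c \in unitmx by rewrite unitmx_mul ug.
have hz0 : forall i : 'I_n, (n <= i)%N -> (g *m c *m 1%:M) i kk = 0.
  by move=> i; rewrite leqNgt ltn_ord.
have hc0 : forall j i : 'I_n, (j < kk)%N -> (g *m c *m 1%:M) i j = (g *m c) i j.
  by move=> *; rewrite mulmx1.
have [c' [u1 u2 hcols [r [hr0 hrz hrl]]]] :=
  @inner (g *m c) kk l uG hl n 1%:M (@upper1) (unitmx1 _ _) hc0 hz0.
exists (c *m c'), (fun j => if j == kk then r else l j); split.
- exact: upper_mul.
- by rewrite unitmx_mul uc2.
- move=> j hj; rewrite mulmxA; case: (eqVneq j kk) => [->|njk]; first by split.
  have hjk : (j < k)%N.
    by rewrite ltn_neqAle -ltnS hj andbT; apply: contra njk => /eqP e; apply/eqP/val_inj.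
  have [h1 h2] := hl j hjk; split; first by rewrite hcols.
  by move=> i hi; rewrite hcols // h2.
- have lt_of : forall j : 'I_n, (j < k.+1)%N -> j != kk -> (j < k)%N.
    move=> j hj njk.
    by rewrite ltn_neqAle -ltnS hj andbT; apply: contra njk => /eqP e; apply/eqP/val_inj.
  move=> j1 j2 h1 h2; case: (eqVneq j1 kk) => [->|n1]; case: (eqVneq j2 kk) => [->|n2] //.
  + by move=> e; exfalso; move: (hrl j2 (lt_of _ h2 n2)); rewrite e eqxx.
  + by move=> e; exfalso; move: (hrl j1 (lt_of _ h1 n1)); rewrite e eqxx.
  + by apply: hinj; apply: lt_of.
Qed.

Lemma bruhat (g : 'M[F]_n) : g \in unitmx ->
  exists s : 'S_n, exists b1, exists b2, [/\ upper b1, b1 \in unitmx, upper b2, b2 \in unitmx &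
    g = b1 *m perm_mx s *m b2].
Proof.
move=> ug; have [c [l [uc1 uc2 hl hinj]]] := outer ug (leqnn n).
have linj : injective l by move=> j1 j2; apply: hinj.
set s := perm linj.
set b1 := col_perm (s^-1)%g (g *m c).
have Eb : b1 *m perm_mx (s^-1)%g = g *m c.
  by rewrite /b1 col_permE -mulmxA -perm_mxM mulVg perm_mx1 mulmx1.
have hb : forall i j, b1 i j = (g *m c) i ((s^-1)%g j) by move=> i j; rewrite /b1 mxE.
have hls : forall j, l ((s^-1)%g j) = j by move=> j; rewrite -[l _]permE /s permKV.
have ub1 : upper b1.
  move=> i j lt_ji; rewrite hb; apply: (proj2 (hl _ (ltn_ord _))).
  by rewrite hls.
exists (s^-1)%g, b1, (invmx c); split => //.
- rewrite upper_unitP //; apply/forallP => j; rewrite hb.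
  by have [+ _] := hl ((s^-1)%g j) (ltn_ord _); rewrite hls.
- exact: upper_inv.
- by rewrite unitmx_inv.
- by rewrite Eb mulmxK.
Qed.

End Gen.

Section Main.
Variables (R : realType) (m : nat).
Local Notation C := (R[i]).
Local Notation n := m.+1.
Local Notation M := 'M[C]_n.

Lemma uuP (b : M) : upper_unit b <-> upper b /\ b \in unitmx.
Proof. by split => [[h1 h2]|[h1 h2]]. Qed.

Lemma permmat_perm (w : 'S_n) : permmat R w = perm_mx (w^-1)%g.
Proof.
by apply/matrixP => i j; rewrite !mxE (canF_eq (permKV w)).
Qed.

Lemma permmat_unit (w : 'S_n) : permmat R w \in unitmx.
Proof. by rewrite permmat_perm unitmx_perm. Qed.

Variable h : 'I_n -> nat.
Hypothesis hh : hessenberg_fun h.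

Lemma XH_right (g b : M) : XH h g -> upper_unit b -> XH h (g *m b).
Proof.
move=> [ug hg] /uuP[b1 b2]; split; first by rewrite unitmx_mul ug.
have -> : invmx (g *m b) *m E1n R m *m (g *m b) =
   invmx b *m (invmx g *m E1n R m *m g) *m b by rewrite invmxM // !mulmxA.
have ib := upper_inv b1 b2.
set Y := invmx g *m E1n R m *m g.
move=> i j hji; rewrite mxE big1 // => k _.
case: (ltnP j k) => hk; first by rewrite b1 // mulr0.
rewrite mxE big1 ?mul0r // => l _.
case: (ltnP l i) => hl; first by rewrite ib // mul0r.
rewrite hg ?mulr0 //.
by rewrite (leq_trans _ hl) // (leq_trans _ hji) // (proj2 hh).
Qed.

Lemma conjE1n (b : M) : upper_unit b ->
  invmx b *m E1n R m *m b = (invmx b 0 0 * b ord_max ord_max) *: E1n R m.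
Proof.
move=> /uuP[b1 b2]; have ib := upper_inv b1 b2.
apply/matrixP => i j; rewrite mxE (bigD1 ord_max) //= big1 => [|k nk]; last first.
  by rewrite mul_delta_r (negbTE nk) mul0r.
rewrite mul_delta_r eqxx addr0 !mxE.
case: (eqVneq i 0) => [->|ni]; last first.
  by rewrite ib ?mul0r ?mulr0 // lt0n; apply: contra ni => /eqP e; apply/eqP/val_inj.
case: (eqVneq j ord_max) => [->|nj]; first by rewrite /= !mulr1.
rewrite b1 ?mulr0 //.
rewrite ltn_neqAle -ltnS ltn_ord andbT.
by apply: contra nj => /eqP e; apply/eqP/val_inj.
Qed.

Lemma XH_left (g b : M) : upper_unit b -> (XH h (b *m g) <-> XH h g).
Proof.
move=> hb; have [b1 b2] := (iffLR (uuP b)) hb.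
have ib := upper_inv b1 b2.
have cnz : invmx b 0 0 * b ord_max ord_max != 0.
  rewrite mulf_neq0 //.
    by move: (unitmx_inv b); rewrite b2 upper_unitP // => /forallP.
  by move: b2; rewrite upper_unitP // => /forallP.
suff E : forall g, g \in unitmx -> invmx (b *m g) *m E1n R m *m (b *m g) =
   (invmx b 0 0 * b ord_max ord_max) *: (invmx g *m E1n R m *m g).
  split => [[ug hg]|[ug hg]].
    have ug' : g \in unitmx by move: ug; rewrite unitmx_mul => /andP[].
    split => // i j hji; move: (hg i j hji); rewrite E // mxE => /eqP.
    by rewrite mulf_eq0 (negbTE cnz) /= => /eqP.
  split; first by rewrite unitmx_mul b2.
  by move=> i j hji; rewrite E // mxE hg // mulr0.
move=> g0 ug0.
rewrite invmxM // -!mulmxA (mulmxA (invmx b)) (mulmxA _ b) conjE1n //.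
by rewrite -!scalemxAl -scalemxAr !mulmxA.
Qed.

Lemma XH_closed : zariski_closed (@XH R m h).
Proof.
pose Xm : 'M[{mpoly C[n * n]}]_n := \matrix_(i, j) 'X_(mxvec_index i j).
pose P := fun p : {mpoly C[n * n]} => exists i j : 'I_n, (h j <= i)%N /\
   p = (\adj Xm *m delta_mx 0 ord_max *m Xm) i j.
exists P => g.
set v := fun k => mxvec g 0 k.
have Xv : map_mx (meval v) Xm = g.
  by apply/matrixP => i j; rewrite !mxE mevalXU /v mxvecE.
have ev : forall i j, ((\adj Xm *m delta_mx 0 ord_max *m Xm) i j).@[v] =
    (\adj g *m E1n R m *m g) i j.
  move=> i j; transitivity ((map_mx (meval v) (\adj Xm *m delta_mx 0 ord_max *m Xm)) i j).
    by rewrite [RHS]mxE.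
  by rewrite !map_mxM map_mx_adj map_delta_mx Xv.
split => [[ug hg]|[ug hg]]; split => //.
  have dnz : (\det g)^-1 != 0 by rewrite invr_eq0 -unitfE -unitmxE.
  move=> p [i [j [hji ->]]]; rewrite ev.
  move: (hg i j hji); rewrite /invmx ug -!scalemxAl mxE => /eqP.
  by rewrite mulf_eq0 (negbTE dnz) /= => /eqP.
move=> i j hji; rewrite /invmx ug -!scalemxAl mxE -ev hg ?mulr0 //.
by exists i, j.
Qed.

End Main.

Theorem mainTheorem2 (R : realType) (m : nat) (h : 'I_m.+1 -> nat) :
  hessenberg_fun h ->
  exists W : {set 'S_m.+1},
    forall g : 'M[R[i]]_m.+1,
      XH h g <-> exists2 w, w \in W & schubert w g.
Proof.
move=> hh.
pose W := [set w : 'S_m.+1 | [forall i : 'I_m.+1, [forall j : 'I_m.+1,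
   (h j <= i)%N ==> ((invmx (permmat R w) *m E1n R m *m permmat R w) i j == 0)]]].
have hW : forall w, w \in W <-> XH h (permmat R w).
  move=> w; rewrite inE; split.
    move=> /forallP H; split; first exact: permmat_unit.
    by move=> i j hji; move: (forallP (H i) j); rewrite hji /= => /eqP.
  move=> [_ H]; apply/forallP => i; apply/forallP => j.
  by apply/implyP => hji; rewrite H.
exists W => g; split.
  move=> hg; have ug := proj1 hg.
  have [s [b1 [b2 [u1 u2 u3 u4 E]]]] := bruhat ug.
  have hb1 : upper_unit b1 by apply/uuP.
  have hb2 : upper_unit b2 by apply/uuP.
  have Ep : permmat R (s^-1)%g = perm_mx s by rewrite permmat_perm invgK.
  exists (s^-1)%g.
    apply/hW; rewrite Ep.
    have hib : upper_unit (invmx b2).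
      by apply/uuP; split; [exact: upper_inv | rewrite unitmx_inv].
    have := hg; rewrite E -mulmxA => /(XH_left _ _ hb1) H.
    have := XH_right hh H hib.
    by rewrite -mulmxA mulmxV // mulmx1.
  split => // Z hZ _ hZw; rewrite E -Ep.
  by apply: hZ => //; apply: hZw.
move=> [w /hW hw [ug hs]]; apply: hs.
- by move=> g0 b hg0 hb; apply: XH_right.
- exact: XH_closed.
- by move=> b hb; apply/(XH_left _ _ hb).
Qed.
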